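(* Let $f:[0,1]\to\mathbb{R}$ be bounded and let $0<a<b<1$. Assume that $f(t)=c$ for all $t\in(a,b)$, for some real constant $c$. Then for every $n\in\mathbb{N}$ and every $x\in(a,b)$, \[ |B_nf(x)-f(x)|\leq \|f-c\|\left(e^{-nr(x,a)}+e^{-nr(x,b)}\right). \]
   Context: For a bounded function $f:[0,1]\to\mathbb{R}$, $\|f\|=\sup_{t\in[0,1]}|f(t)|$, and $\|f-c\|$ is the supremum norm of $t\mapsto f(t)-c$. The $n$th Bernstein polynomial of $f$ is $B_nf(x)=\sum_{j=0}^n f(j/n)\binom{n}{j}x^j(1-x)^{n-j}$, $x\in[0,1]$. For $x,\theta\in(0,1)$, $r(x,\theta)=\theta\log\frac{\theta}{x}+(1-\theta)\log\frac{1-\theta}{1-x}$ (the Kullback–Leibler divergence between Bernoulli distributions with success probabilities $\theta$ and $x$). *)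

(* Defs.v *)
From Stdlib Require Import Reals.
From Coquelicot Require Import Coquelicot.
Open Scope R_scope.

Definition bounded01 (f : R -> R) : Prop :=
  exists M : R, forall t : R, 0 <= t <= 1 -> Rabs (f t) <= M.

Definition supnorm_shift (f : R -> R) (c : R) : R :=
  real (Lub_Rbar (fun y => exists t : R, 0 <= t <= 1 /\ y = Rabs (f t - c))).

Definition bernstein (n : nat) (f : R -> R) (x : R) : R :=
  sum_f_R0 (fun j => f (INR j / INR n) * Binomial.C n j * x ^ j * (1 - x) ^ (n - j)) n.

Definition kl (x theta : R) : R :=
  theta * ln (theta / x) + (1 - theta) * ln ((1 - theta) / (1 - x)).

(* Main.v *)
Require Import Defs.
From Stdlib Require Import Reals Lra Lia.
From Coquelicot Require Import Coquelicot.
Open Scope R_scope.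

Lemma sup_bound (f : R -> R) (c : R) : bounded01 f ->
  forall t, 0 <= t <= 1 -> Rabs (f t - c) <= supnorm_shift f c.
Proof.
  intros [M HM] t Ht.
  unfold supnorm_shift.
  set (E := fun y => exists t : R, 0 <= t <= 1 /\ y = Rabs (f t - c)).
  destruct (Lub_Rbar_correct E) as [Hub Hlst].
  assert (H1 : Rbar_le (Rabs (f t - c)) (Lub_Rbar E)).
  { apply Hub. exists t; split; auto. }
  assert (H2 : Rbar_le (Lub_Rbar E) (M + Rabs c)).
  { apply Hlst. intros y [s [Hs ->]].
    simpl. pose proof (HM s Hs). pose proof (Rabs_triang (f s) (- c)).
    rewrite Rabs_Ropp in H0. unfold Rminus. lra. }
  destruct (Lub_Rbar E); simpl in *; tauto.
Qed.

Lemma C_pos n j : 0 <= Binomial.C n j.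
Proof.
  unfold Binomial.C. apply Rmult_le_pos; [apply pos_INR|].
  left; apply Rinv_0_lt_compat; apply Rmult_lt_0_compat; apply INR_fact_lt_0.
Qed.

Definition P n x j := Binomial.C n j * x ^ j * (1 - x) ^ (n - j).

Lemma P_pos n x j : 0 <= x <= 1 -> 0 <= P n x j.
Proof.
  intros Hx. unfold P. apply Rmult_le_pos; [apply Rmult_le_pos|];
  try apply C_pos; apply pow_le; lra.
Qed.

Lemma exp_INR_mul n y : exp (INR n * y) = exp y ^ n.
Proof.
  induction n. simpl. rewrite Rmult_0_l, exp_0; auto.
  rewrite S_INR, <- tech_pow_Rmult, Rmult_plus_distr_r, exp_plus, IHn, Rmult_1_l. ring.
Qed.

Definition ind (l th : R) n j : R :=
  if Rle_dec 0 (l * (INR j - INR n * th)) then 1 else 0.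

Lemma chernoff n x l th : 0 <= x <= 1 ->
  sum_f_R0 (fun j => ind l th n j * P n x j) n
  <= exp (- l * INR n * th) * (x * exp l + (1 - x)) ^ n.
Proof.
  intros Hx.
  rewrite binomial, scal_sum.
  apply sum_Rle. intros j Hj.
  assert (E : Binomial.C n j * (x * exp l) ^ j * (1 - x) ^ (n - j) * exp (- l * INR n * th)
             = P n x j * exp (l * (INR j - INR n * th))).
  { unfold P. rewrite Rpow_mult_distr, <- exp_INR_mul.
    replace (l * (INR j - INR n * th)) with (INR j * l + (- l * INR n * th)) by ring.
    rewrite exp_plus. ring. }
  rewrite E. pose proof (P_pos n x j Hx).
  unfold ind. destruct (Rle_dec 0 (l * (INR j - INR n * th))) as [h|h].
  - rewrite Rmult_1_l. rewrite <- (Rmult_1_r (P n x j)) at 1.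
    apply Rmult_le_compat_l; auto.
    rewrite <- exp_0. destruct h as [h|h]. left; apply exp_increasing; auto.
    rewrite <- h; lra.
  - rewrite Rmult_0_l. apply Rmult_le_pos; auto. left; apply exp_pos.
Qed.

Definition lam x th := ln (th * (1 - x) / (x * (1 - th))).

Lemma chernoff_kl n x th : 0 < x < 1 -> 0 < th < 1 ->
  exp (- lam x th * INR n * th) * (x * exp (lam x th) + (1 - x)) ^ n
  = exp (- INR n * kl x th).
Proof.
  intros Hx Hth. unfold lam.
  assert (Hq : 0 < th * (1 - x) / (x * (1 - th))).
  { apply Rdiv_lt_0_compat; apply Rmult_lt_0_compat; lra. }
  rewrite exp_ln by auto.
  replace (x * (th * (1 - x) / (x * (1 - th))) + (1 - x)) with ((1 - x) / (1 - th))
    by (field; lra).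
  rewrite <- (exp_ln ((1 - x) / (1 - th))) by (apply Rdiv_lt_0_compat; lra).
  rewrite <- exp_INR_mul, <- exp_plus. f_equal.
  unfold kl.
  rewrite (ln_div (th * (1 - x))) by (apply Rmult_lt_0_compat; lra).
  rewrite !ln_mult by lra.
  rewrite !ln_div by lra. ring.
Qed.

Theorem theorem1 (f : R -> R) (a b c : R) :
  bounded01 f ->
  0 < a -> a < b -> b < 1 ->
  (forall t : R, a < t < b -> f t = c) ->
  forall (n : nat) (x : R), a < x < b ->
    Rabs (bernstein n f x - f x)
      <= supnorm_shift f c * (exp (- INR n * kl x a) + exp (- INR n * kl x b)).
Proof.
  intros Hf Ha Hab Hb Hc n x Hx.
  assert (Hx01 : 0 <= x <= 1) by lra.
  set (S := supnorm_shift f c).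
  assert (HS : 0 <= S).
  { apply Rle_trans with (Rabs (f 0 - c)); [apply Rabs_pos|]. apply sup_bound; auto; lra. }
  rewrite (Hc x Hx).
  assert (Hsum1 : sum_f_R0 (P n x) n = 1).
  { unfold P. rewrite <- binomial. replace (x + (1 - x)) with 1 by ring. apply pow1. }
  assert (E : bernstein n f x - c = sum_f_R0 (fun j => (f (INR j / INR n) - c) * P n x j) n).
  {
    transitivity (sum_f_R0 (fun j => f (INR j / INR n) * P n x j) n - c * sum_f_R0 (P n x) n).
    - rewrite Hsum1, Rmult_1_r. f_equal. unfold bernstein, P. apply sum_eq; intros; ring.
    - rewrite scal_sum, <- minus_sum. apply sum_eq; intros; ring. }
  rewrite E.
  assert (Ia : lam x a < 0).
  { unfold lam. rewrite <- ln_1. apply ln_increasing.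
    apply Rdiv_lt_0_compat; apply Rmult_lt_0_compat; lra.
    apply Rmult_lt_reg_r with (x * (1 - a)). apply Rmult_lt_0_compat; lra.
    unfold Rdiv. rewrite Rmult_assoc, Rinv_l, Rmult_1_r, Rmult_1_l.
    nra. apply Rgt_not_eq, Rmult_lt_0_compat; lra. }
  assert (Ib : 0 < lam x b).
  { unfold lam. rewrite <- ln_1. apply ln_increasing. lra.
    apply Rmult_lt_reg_r with (x * (1 - b)). apply Rmult_lt_0_compat; lra.
    unfold Rdiv. rewrite Rmult_assoc, Rinv_l, Rmult_1_r, Rmult_1_l.
    nra. apply Rgt_not_eq, Rmult_lt_0_compat; lra. }
  eapply Rle_trans; [apply Rsum_abs|].
  rewrite <- (chernoff_kl n x a), <- (chernoff_kl n x b) by lra.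
  eapply Rle_trans with (S * (sum_f_R0 (fun j => ind (lam x a) a n j * P n x j) n
                            + sum_f_R0 (fun j => ind (lam x b) b n j * P n x j) n)).
  2:{ apply Rmult_le_compat_l; auto. apply Rplus_le_compat; apply chernoff; auto. }
  rewrite <- plus_sum, scal_sum. apply sum_Rle. intros j Hj.
  pose proof (P_pos n x j Hx01) as HP.
  rewrite Rabs_mult, (Rabs_right (P n x j)) by lra.
  assert (Hind : forall l th, 0 <= ind l th n j) by (intros; unfold ind; destruct Rle_dec; lra).
  pose proof (Hind (lam x a) a). pose proof (Hind (lam x b) b).
  destruct (Rle_dec (INR j) (INR n * a)) as [h1|h1];
  [|destruct (Rle_dec (INR n * b) (INR j)) as [h2|h2]].
  - assert (ind (lam x a) a n j = 1).
    { unfold ind. destruct Rle_dec as [|h]; auto. exfalso; apply h. nra. }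
    assert (Rabs (f (INR j / INR n) - c) <= S).
    { apply sup_bound; auto. destruct (Nat.eq_dec n 0) as [->|hn].
      assert (j = 0%nat) by lia; subst j; simpl. unfold Rdiv; rewrite Rmult_0_l; lra.
      assert (0 < INR n) by (apply lt_0_INR; lia).
      pose proof (le_INR _ _ Hj). split.
      apply Rdiv_le_0_compat; [apply pos_INR|lra].
      apply Rmult_le_reg_r with (INR n); auto. unfold Rdiv. rewrite Rmult_assoc, Rinv_l; lra. }
    match goal with H : ind (lam x a) a n j = 1 |- _ => rewrite H end.
    assert (0 <= ind (lam x b) b n j * P n x j * S) by (apply Rmult_le_pos; [apply Rmult_le_pos|]; auto).
    assert (Rabs (f (INR j / INR n) - c) * P n x j <= S * P n x j) by (apply Rmult_le_compat_r; auto).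
    lra.
  - assert (ind (lam x b) b n j = 1).
    { unfold ind. destruct Rle_dec as [|h]; auto. exfalso; apply h. nra. }
    assert (Rabs (f (INR j / INR n) - c) <= S).
    { apply sup_bound; auto. destruct (Nat.eq_dec n 0) as [->|hn].
      assert (j = 0%nat) by lia; subst j; simpl. unfold Rdiv; rewrite Rmult_0_l; lra.
      assert (0 < INR n) by (apply lt_0_INR; lia).
      pose proof (le_INR _ _ Hj). split.
      apply Rdiv_le_0_compat; [apply pos_INR|lra].
      apply Rmult_le_reg_r with (INR n); auto. unfold Rdiv. rewrite Rmult_assoc, Rinv_l; lra. }
    match goal with H : ind (lam x b) b n j = 1 |- _ => rewrite H end.
    assert (0 <= ind (lam x a) a n j * P n x j * S) by (apply Rmult_le_pos; [apply Rmult_le_pos|]; auto).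
    assert (Rabs (f (INR j / INR n) - c) * P n x j <= S * P n x j) by (apply Rmult_le_compat_r; auto).
    lra.
  - assert (0 < INR n).
    { destruct (Nat.eq_dec n 0) as [->|hn]. assert (j = 0%nat) by lia; subst j; exfalso; apply h1; simpl; lra. apply lt_0_INR; lia. }
    rewrite Hc. rewrite Rminus_diag, Rabs_R0, Rmult_0_l. apply Rmult_le_pos; auto. apply Rplus_le_le_0_compat; apply Rmult_le_pos; auto.
    split.
    + apply Rmult_lt_reg_r with (INR n); auto. unfold Rdiv. rewrite Rmult_assoc, Rinv_l; lra.
    + apply Rmult_lt_reg_r with (INR n); auto. unfold Rdiv. rewrite Rmult_assoc, Rinv_l; lra.
Qed.
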